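(* Let $w_1=a$, $w_2=b$, $w_3=ba$, $w_4=baabbaa$, and $w_n = b\cdot\mathit{TM}_{2n-8}\cdot\overline{\mathit{TM}_{2n-6}}\cdot\overline{\mathit{TM}_{2n-6}}'$ for $n\ge 5$. Then: (1) the infinite concatenation $w_1w_2w_3\cdots$ equals the infinite Thue–Morse word $\mathcal{TM}$, i.e. $\mathcal{TM}=\lim_{n\to\infty} w_1\cdots w_n$; (2) $w_n\preceq w_{n+1}$ for every $n\ge1$; (3) $w_n$ is a Nyldon word for every $n\ge 1$. In particular, $\mathcal{TM}$ admits a factorization into an infinite lexicographically non-decreasing sequence of Nyldon words.
   Context: Strings are over the binary alphabet $\{a,b\}$ ordered by $a \prec b$, and $\prec$ also denotes the induced lexicographic order on strings: $x \prec y$ iff $x$ is a proper prefix of $y$, or there is $i$ with $x[1..i-1]=y[1..i-1]$ and $x[i]\prec y[i]$; $x\preceq y$ means $x\prec y$ or $x=y$. Nyldon words are defined recursively: every string of length $1$ is a Nyldon word; a string $w$ with $|w|\ge 2$ is a Nyldon word iff there is no factorization $w=\gamma_1\cdots\gamma_m$ with $m\ge 2$, each $\gamma_i$ a nonempty Nyldon word, and $\gamma_1\preceq\gamma_2\preceq\cdots\preceq\gamma_m$. For a binary string $w$, $\overline{w}$ is obtained by exchanging $a$ and $b$ letterwise, and $w'$ is $w$ with its last letter removed; $\overline{w}'$ means $(\overline{w})'$. Thue–Morse words: $\mathit{TM}_0=a$ and $\mathit{TM}_k=\mathit{TM}_{k-1}\cdot\overline{\mathit{TM}_{k-1}}$ for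 $k\ge1$; the infinite Thue–Morse word is $\mathcal{TM}=\lim_{k\to\infty}\mathit{TM}_k$ (each $\mathit{TM}_k$ is a prefix of $\mathit{TM}_{k+1}$). *)

(* Defs.v *)
From mathcomp Require Import all_boot.
Set Implicit Arguments. Unset Strict Implicit. Unset Printing Implicit Defensive.

Notation word := (seq bool).
Notation la := false.
Notation lb := true.

Fixpoint lexlt (x y : word) : bool :=
  match x, y with
  | [::], _ :: _ => true
  | _, [::] => false
  | c :: x', d :: y' => (~~ c && d) || ((c == d) && lexlt x' y')
  end.

Definition lexle (x y : word) : bool := lexlt x y || (x == y).

(* Nyldon words, recursive definition, with fuel bounding the length. *)
Fixpoint nyldon_fuel (n : nat) (w : word) : Prop :=
  match n with
  | 0 => False
  | n'.+1 =>
      size w = 1 \/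
      (2 <= size w /\
       ~ (exists gs : seq word,
            [/\ 2 <= size gs, flatten gs = w,
                (forall g, g \in gs -> nyldon_fuel n' g) &
                sorted lexle gs]))
  end.

Definition Nyldon (w : word) : Prop := nyldon_fuel (size w) w.

Definition compl (w : word) : word := map negb w.
Definition dropl (w : word) : word := take (size w).-1 w.

Fixpoint TM (k : nat) : word :=
  match k with
  | 0 => [:: la]
  | k'.+1 => TM k' ++ compl (TM k')
  end.

(* Infinite Thue-Morse word: letter i is letter i of TM_(i+1) (size 2^(i+1) > i);
   since each TM_k is a prefix of TM_(k+1), this is the limit. *)
Definition TMinf (i : nat) : bool := nth la (TM i.+1) i.

(* The words w_n (w_0 is an unused dummy) *)
Definition wn (n : nat) : word :=
  match n with
  | 0 => [::]
  | 1 => [:: la]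
  | 2 => [:: lb]
  | 3 => [:: lb; la]
  | 4 => [:: lb; la; la; lb; lb; la; la]
  | _ => lb :: TM (2 * n - 8) ++ compl (TM (2 * n - 6)) ++ dropl (compl (TM (2 * n - 6)))
  end.

Definition Wprefix (n : nat) : word := flatten [seq wn k | k <- iota 1 n].

(* Main.v *)
Require Import Defs.
From mathcomp Require Import all_boot.
From mathcomp Require Import zify.
From Stdlib Require Import Classical.
Set Implicit Arguments. Unset Strict Implicit. Unset Printing Implicit Defensive.

Lemma lexle_cons c x y : lexle (c :: x) (c :: y) = lexle x y.
Proof. by rewrite /lexle /= eqseq_cons eqxx; case: c. Qed.

Lemma lexle_cat p x y : lexle (p ++ x) (p ++ y) = lexle x y.
Proof. by elim: p => //= c p IH; rewrite lexle_cons. Qed.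

Lemma lexle_ba x y : lexle (lb :: x) (la :: y) = false.
Proof. by []. Qed.

Lemma lexle_ab x y : lexle (la :: x) (lb :: y).
Proof. by []. Qed.

Lemma lexle_nil c x : lexle (c :: x) [::] = false.
Proof. by []. Qed.

Lemma cmp_mismatch d (g1 g2 : word) : d < size g1 ->
  (forall i, i < d -> i < size g2 -> nth la g2 i = nth la g1 i) ->
  (d < size g2 -> nth la g2 d = la /\ nth la g1 d = lb) ->
  lexle g1 g2 = false.
Proof.
elim: d g1 g2 => [|d IH] [|c g1] [|e g2] //=.
- move=> _ _ /(_ isT) [-> ->]; by [].
- move=> Hs Heq Hm. have Hce : e = c by apply: (Heq 0).
  rewrite Hce lexle_cons. apply: IH => //.
  + by move=> i Hi Hi2; apply: (Heq i.+1).
Qed.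

Lemma fuel_nonempty n g : nyldon_fuel n g -> 0 < size g.
Proof. by case: n => //= n; case: g => //= [[//|[H _]]]. Qed.

Lemma size_comp_lt (gs : seq word) g :
  (forall h, h \in gs -> 0 < size h) -> g \in gs -> 2 <= size gs ->
  size g < size (flatten gs).
Proof.
elim: gs => //= h t IH Hne; rewrite inE => /orP [/eqP ->|Hg] Hs.
- rewrite size_cat. case: t Hne Hs {IH} => //= h2 t2 Hne _.
  have : 0 < size h2 by apply: Hne; rewrite !inE eqxx orbT.
  rewrite size_cat. lia.
- rewrite size_cat.
  have Hh : 0 < size h by apply: Hne; rewrite inE eqxx.
  case: t IH Hne Hs Hg => //= h2 [|h3 t3] IH Hne Hs Hg.
  + move: Hg; rewrite inE => /eqP ->; rewrite cats0; lia.
  + have := IH (fun x Hx => Hne x ltac:(by rewrite inE Hx orbT)) Hg isT. lia.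
Qed.

Lemma fuel_mono n : forall m g, size g <= n -> size g <= m ->
  (nyldon_fuel n g <-> nyldon_fuel m g).
Proof.
elim: n => [|n IH] m g Hn Hm.
  have Eg : g = [::] by move: Hn {Hm}; case: g.
  rewrite Eg {Eg Hn Hm}.
  case: m => [|m] /=; first by [].
  by split => // [[]] // [].
case: g Hn Hm => [|c g] Hn Hm.
  case: m {Hm} => [|m] /=; first by split => // [[]] // [].
  by split => [[]|[]] // [].
case: m Hm => // m Hm.
set G := c :: g in Hn Hm *.
have E : (exists gs : seq word, [/\ 2 <= size gs, flatten gs = G,
            (forall h, h \in gs -> nyldon_fuel n h) & sorted lexle gs]) <->
         (exists gs : seq word, [/\ 2 <= size gs, flatten gs = G,
            (forall h, h \in gs -> nyldon_fuel m h) & sorted lexle gs]).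
  split => [[gs [H1 H2 H3 H4]]|[gs [H1 H2 H3 H4]]]; exists gs; split => // h Hh.
  - have Hne : forall h, h \in gs -> 0 < size h := fun h Hh => fuel_nonempty (H3 h Hh).
    have Hlt := size_comp_lt Hne Hh H1; rewrite H2 in Hlt.
    have H5 : size h <= n by lia. have H6 : size h <= m by lia.
    by apply/(IH m h H5 H6); apply: H3.
  - have Hne : forall h, h \in gs -> 0 < size h := fun h Hh => fuel_nonempty (H3 h Hh).
    have Hlt := size_comp_lt Hne Hh H1; rewrite H2 in Hlt.
    have H5 : size h <= n by lia. have H6 : size h <= m by lia.
    by apply/(IH m h H5 H6); apply: H3.
rewrite /=; split => [[H|[H1 H2]]|[H|[H1 H2]]]; [by left|right|by left|right];
  split => // HH; apply: H2; by apply/E.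
Qed.

Lemma NY_nonempty g : Nyldon g -> 0 < size g.
Proof. exact: fuel_nonempty. Qed.

Lemma NY_single g : size g = 1 -> Nyldon g.
Proof. by move=> Hs; rewrite /Nyldon Hs /=; left. Qed.

Definition Fact (g : word) (gs : seq word) :=
  [/\ 2 <= size gs, flatten gs = g, (forall h, h \in gs -> Nyldon h) & sorted lexle gs].

Lemma fact_lt g gs h : Fact g gs -> h \in gs -> size h < size g.
Proof.
case=> H1 H2 H3 _ Hh. rewrite -H2; apply: size_comp_lt => //.
by move=> x Hx; apply: NY_nonempty; apply: H3.
Qed.

Lemma NY_elim g gs : Nyldon g -> Fact g gs -> False.
Proof.
rewrite /Nyldon => HN HF.
have Hsz : 2 <= size g.
  case: HF => H1 H2 H3 _. case: gs H1 H2 H3 => // h1 [|h2 t] //= _ <- H3.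
  have := NY_nonempty (H3 h1 (mem_head _ _)).
  have := NY_nonempty (H3 h2 ltac:(by rewrite !inE eqxx orbT)).
  rewrite !size_cat; lia.
case: g HN HF Hsz => // c g /=; case=> [Hs|[_ HH]] HF Hsz; first lia.
apply: HH; exists gs; case: HF => H1 H2 H3 H4; split => // h Hh.
have Hlt := fact_lt (And4 H1 H2 H3 H4) Hh.
have H5 : size h <= size h by []. have H6 : size h <= size g by simpl in Hlt; lia.
by apply/(fuel_mono H5 H6); apply: H3.
Qed.

Lemma NY_intro g : 2 <= size g -> (forall gs, Fact g gs -> False) -> Nyldon g.
Proof.
rewrite /Nyldon; case: g => // c g Hs H /=; right; split => //.
move=> [gs [H1 H2 H3 H4]]; apply: (H gs); split => // h Hh.
have Hne : forall h, h \in gs -> 0 < size h := fun h Hh => fuel_nonempty (H3 h Hh).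
have Hlt := size_comp_lt Hne Hh H1; rewrite H2 /= in Hlt.
have H5 : size h <= size g by move: Hlt; rewrite /=; lia. have H6 : size h <= size h by [].
by apply/(fuel_mono H5 H6); apply: H3.
Qed.

Lemma NY_not g : ~ Nyldon g -> 2 <= size g -> exists gs, Fact g gs.
Proof.
move=> HN Hs; apply: NNPP => HE; apply: HN; apply: NY_intro => // gs HF.
by apply: HE; exists gs.
Qed.

Lemma lexle_a_any v : 0 < size v -> lexle [:: la] v.
Proof. by case: v => // [[] v] //= _; rewrite lexle_cons /lexle; case: v. Qed.

Lemma lexle_c_cons c x : lexle [:: c] (c :: x).
Proof. by rewrite lexle_cons /lexle; case: x. Qed.

Lemma fact_cons v h gs : Fact v (h :: gs) ->
  [/\ h ++ flatten gs = v, 0 < size h, (forall x, x \in gs -> 0 < size x),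
      Nyldon h & path lexle h gs].
Proof.
case=> H1 H2 H3 H4; split => //.
- by apply: NY_nonempty; apply: H3; rewrite inE eqxx.
- by move=> x Hx; apply: NY_nonempty; apply: H3; rewrite inE Hx orbT.
- by apply: H3; rewrite inE eqxx.
Qed.

Lemma prepend u v : Nyldon u -> 0 < size v -> (Nyldon v -> lexle u v) ->
  (forall h gs, Fact v (h :: gs) -> lexle u h) -> ~ Nyldon (u ++ v).
Proof.
move=> Hu Hv H1 H2 Huv.
case: (classic (Nyldon v)) => Hnv.
- apply: (NY_elim Huv (gs := [:: u; v])); split => //=.
  + by rewrite cats0.
  + by move=> h; rewrite !inE => /orP [/eqP ->|/eqP ->].
  + by rewrite andbT; apply: H1.
- have Hs : 2 <= size v.
    move: Hv Hnv {H1 H2 Huv}; case: v => // c [|d v] //= _ Hnv.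
    by exfalso; apply: Hnv; apply: NY_single.
  have [gs HF] := NY_not Hnv Hs.
  case: gs HF => [|h gs] HF; first by case: HF.
  apply: (NY_elim Huv (gs := u :: h :: gs)); have HF' := HF; case: HF' => G1 G2 G3 G4.
  split => //=.
  + by rewrite -G2.
  + by move=> x; rewrite inE => /orP [/eqP ->|Hx] //; apply: G3.
  + by rewrite (H2 h gs HF).
Qed.

Lemma NY_head_b g : Nyldon g -> 2 <= size g -> nth la g 0 = lb.
Proof.
case: g => // [[] v] // HN Hs; exfalso.
have Hv : 0 < size v by move: Hs => /=; lia.
apply: (@prepend [:: la] v _ Hv _ _ HN).
- by apply: NY_single.
- by move=> _; apply: lexle_a_any.
- by move=> h gs /fact_cons [] _ Hh; rewrite lexle_a_any.
Qed.

Lemma NY_not_bb t : ~ Nyldon [:: lb, lb & t].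
Proof.
apply: (@prepend [:: lb] (lb :: t)).
- by apply: NY_single.
- by [].
- by move=> _; apply: lexle_c_cons.
- move=> h gs /fact_cons [E Hh _ _ _]. case: h E Hh => // c h [-> _] _.
  by apply: lexle_c_cons.
Qed.

Lemma NY_ba : Nyldon [:: lb; la].
Proof.
apply: NY_intro => // gs HF; have HF' := HF; case: HF' => H1 H2 H3 H4.
case: gs H1 H2 H3 H4 HF => // h1 [|h2 rest] // _ H2 H3 H4 HF.
have Hn1 : 0 < size h1 by apply: NY_nonempty; apply: H3; rewrite inE eqxx.
have Hn2 : 0 < size h2 by apply: NY_nonempty; apply: H3; rewrite !inE eqxx orbT.
move: H2 H4 {H3 HF} => /=; case: h1 Hn1 => // c1 [|d1 h1] _; case: h2 Hn2 => // c2 h2 _ //=.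
- by case=> -> ->.
- by case=> _ _; case: h1.
Qed.

Lemma NY_not_baba t : ~ Nyldon [:: lb, la, lb, la & t].
Proof.
apply: (@prepend [:: lb; la] [:: lb, la & t]).
- exact: NY_ba.
- by [].
- by move=> _; rewrite !lexle_cons /lexle; case: t.
- move=> h gs /fact_cons [E Hh Hgs _ Hp].
  case: h E Hh Hp => // c [|d h] /=.
  + case=> -> E _. case: gs E Hgs => // h2 gs E Hgs /andP [Hle _].
    have : 0 < size h2 by apply: Hgs; rewrite inE eqxx.
    move: E Hle {Hgs}; case: h2 => [|c2 h2] /= E2 Hle2 Hsz //.
    by case: E2 Hle2 => ->.
  + by case=> -> -> _ _ _; rewrite !lexle_cons /lexle; case: h.
Qed.

Lemma nyldon_crit w : 2 <= size w ->
 (forall c1 l, 1 <= c1 -> 1 <= l -> c1 + l <= size w ->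
    lexle (take c1 w) (take l (drop c1 w)) ->
    [\/ 2 <= l /\ (nth la w c1 = lb /\ nth la w c1.+1 = lb),
        4 <= l /\ [/\ nth la w c1 = lb, nth la w c1.+1 = la, nth la w c1.+2 = lb & nth la w c1.+3 = la]
      | c1 + l < size w /\ (nth la w c1 = lb /\ nth la w (c1 + l) = la)]) ->
 Nyldon w.
Proof.
move=> Hs Hc; apply: NY_intro => // gs HF; have HF' := HF; case: HF' => H1 H2 H3 H4.
case: gs H1 H2 H3 H4 HF => // h1 [|h2 rest] // _ H2 H3 H4 HF.
have Hn1 : Nyldon h1 by apply: H3; rewrite inE eqxx.
have Hn2 : Nyldon h2 by apply: H3; rewrite !inE eqxx orbT.
have Hs1 := NY_nonempty Hn1. have Hs2 := NY_nonempty Hn2.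
move: H2 H4 => /= Ew /andP [Hle12 Hpath].
have Esz : size w = size h1 + size h2 + size (flatten rest) by rewrite -Ew !size_cat addnA.
have Ht1 : take (size h1) w = h1 by rewrite -Ew take_size_cat.
have Ht2 : take (size h2) (drop (size h1) w) = h2 by rewrite -Ew drop_size_cat // take_size_cat.
have Hnth1 : forall i, i < size h2 -> nth la w (size h1 + i) = nth la h2 i.
  by move=> i Hi; rewrite -Ew nth_cat ltnNge leq_addr /= addKn nth_cat Hi.
have N0 : nth la w (size h1) = nth la h2 0 by rewrite -[size h1]addn0 Hnth1.
have N1 : 1 < size h2 -> nth la w (size h1).+1 = nth la h2 1 by move=> ?; rewrite -addn1 Hnth1.
have N2 : 2 < size h2 -> nth la w (size h1).+2 = nth la h2 2 by move=> ?; rewrite -addn2 Hnth1.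
have N3 : 3 < size h2 -> nth la w (size h1).+3 = nth la h2 3 by move=> ?; rewrite -addn3 Hnth1.
have := Hc (size h1) (size h2) Hs1 Hs2 ltac:(lia); rewrite Ht1 Ht2 => /(_ Hle12).
case=> [[Hl [Ea Eb]]|[Hl [Ea Eb Ec Ed]]|[Hl [Ea Eb]]].
- move: Ea Eb; rewrite N0 N1 //.
  move: Hn2 Hl {N0 N1 N2 N3 Hnth1 Ht2 Hle12 Hpath Esz Hs2 H3 HF Ew}.
  by case: h2 => [|x [|y t]] //= Hn2 _ Ex Ey; subst x y; move/NY_not_bb: Hn2.
- move: Ea Eb Ec Ed; rewrite N0 N1; last lia. rewrite N2; last lia. rewrite N3; last lia.
  move: Hn2 Hl {N0 N1 N2 N3 Hnth1 Ht2 Hle12 Hpath Esz Hs2 H3 HF Ew}.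
  by case: h2 => [|x [|y [|z [|u t]]]] //= Hn2 _ Ex Ey Ez Eu; subst x y z u; move/NY_not_baba: Hn2.
- case: rest H3 Hpath Ew Esz Hl HF => [|h3 rest] H3 Hpath Ew Esz Hl HF.
    by move: Hl; rewrite Esz /=; lia.
  have Hn3 : Nyldon h3 by apply: H3; rewrite !inE eqxx !orbT.
  have Hs3 := NY_nonempty Hn3.
  move: Hpath => /= /andP [Hle23 _].
  have : nth la w (size h1 + size h2) = nth la h3 0.
    by rewrite -Ew catA nth_cat size_cat ltnn subnn /= nth_cat Hs3.
  rewrite Eb; move: Ea; rewrite N0 => Ea.
  move: Hle23 Ea Hs2 Hs3 {Eb N0 N1 N2 N3 Hnth1 Ht2 Hle12 HF Ew Esz Hl H3 Hn2 Hn3 Hc}.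
  case: h2 => [|x t] //; case: h3 => [|y s] //= Hle Ex _ _ Ey; subst x y.
  by move: Hle.
Qed.

Definition blk (c : bool) : word := [:: c; ~~ c; ~~ c; c].
Definition phi (x : word) : word := flatten (map blk x).

Lemma phi_cat x y : phi (x ++ y) = phi x ++ phi y.
Proof. by rewrite /phi map_cat flatten_cat. Qed.

Lemma size_phi x : size (phi x) = 4 * size x.
Proof. elim: x => // c x IH; rewrite -cat1s phi_cat size_cat IH /=; lia. Qed.

Lemma compl_cat x y : compl (x ++ y) = compl x ++ compl y.
Proof. exact: map_cat. Qed.

Lemma complK x : compl (compl x) = x.
Proof. by rewrite /compl -map_comp map_id_in // => c _ /=; rewrite negbK. Qed.

Lemma size_compl x : size (compl x) = size x.
Proof. exact: size_map. Qed.

Lemma phi_compl x : phi (compl x) = compl (phi x).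
Proof.
elim: x => // c x IH.
by rewrite -cat1s compl_cat !phi_cat IH compl_cat; case: c.
Qed.

Lemma size_TM k : size (TM k) = 2 ^ k.
Proof. elim: k => //= k IH; rewrite size_cat size_compl IH expnS; lia. Qed.

Lemma TM2 k : TM k.+2 = TM k ++ compl (TM k) ++ compl (TM k) ++ TM k.
Proof. by rewrite /= compl_cat complK !catA. Qed.

Lemma phi_TM j : phi (TM (2 * j)) = TM (2 * j).+2.
Proof.
elim: j => [|j IH]; first by [].
have -> : 2 * j.+1 = (2 * j).+2 by lia.
by rewrite TM2 !phi_cat phi_compl IH -TM2.
Qed.

Definition z0 : word := [:: la; lb; la; la; lb; lb; la; la; lb].
Definition V j := iter j phi z0.

Lemma V_eq j : V j = TM (2 * j) ++ compl (TM (2 * j).+2) ++ compl (TM (2 * j).+2).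
Proof.
elim: j => [|j IH]; first by [].
rewrite /V iterS -/(V j) IH !phi_cat !phi_compl phi_TM.
have -> : 2 * j.+1 = (2 * j).+2 by lia.
have E := phi_TM j.+1; have E2 : 2 * j.+1 = (2 * j).+2 by lia.
by rewrite E2 in E; rewrite E.
Qed.

Lemma dropl_cat x y : 0 < size y -> dropl (x ++ y) = x ++ dropl y.
Proof.
move=> Hy; rewrite /dropl size_cat take_cat.
have -> : ((size x + size y).-1 < size x) = false by lia.
by have -> : (size x + size y).-1 - size x = (size y).-1 by lia.
Qed.

Lemma wn_eq m : wn m.+4.+1 = lb :: dropl (V m.+1).
Proof.
change (wn m.+4.+1) with (lb :: TM (2 * m.+4.+1 - 8) ++ compl (TM (2 * m.+4.+1 - 6)) ++ dropl (compl (TM (2 * m.+4.+1 - 6)))).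
rewrite V_eq.
have -> : 2 * m.+4.+1 - 6 = (2 * m.+1).+2 by lia.
have -> : 2 * m.+4.+1 - 8 = 2 * m.+1 by lia.
have Hs : forall k, 0 < size (compl (TM k)) by move=> k; rewrite size_compl size_TM expn_gt0.
rewrite dropl_cat; last by rewrite size_cat; have := Hs (2*m.+1).+2; lia.
by rewrite dropl_cat.
Qed.

Lemma nth_phi x q r : q < size x -> r < 4 ->
  nth la (phi x) (4 * q + r) = nth la (blk (nth la x q)) r.
Proof.
elim: x q => // c x IH [|q] Hq Hr.
- by rewrite -cat1s phi_cat nth_cat /= muln0 add0n Hr.
- rewrite -cat1s phi_cat nth_cat /=.
  have -> : (4 * q.+1 + r < 4) = false by lia.
  have -> : 4 * q.+1 + r - 4 = 4 * q + r by lia.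
  by apply: IH.
Qed.

Section PhiFacts.
Variable x : word.
Let N := size x.
Let X q := nth la x q.
Let v := phi x.

Lemma ph0 q : q < N -> nth la v (4 * q) = X q.
Proof. by move=> Hq; rewrite -[4 * q]addn0 nth_phi. Qed.
Lemma ph1 q : q < N -> nth la v (4 * q + 1) = ~~ X q.
Proof. by move=> Hq; rewrite nth_phi. Qed.
Lemma ph2 q : q < N -> nth la v (4 * q + 2) = ~~ X q.
Proof. by move=> Hq; rewrite nth_phi. Qed.
Lemma ph3 q : q < N -> nth la v (4 * q + 3) = X q.
Proof. by move=> Hq; rewrite nth_phi. Qed.

Lemma phi_shift q e0 : q + e0 <= N ->
  (forall i, i < e0 -> X (q + i) = X i) ->
  forall i, i < 4 * e0 -> nth la v (4 * q + i) = nth la v i.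
Proof.
move=> Hqe H i Hi.
have -> : 4 * q + i = 4 * (q + i %/ 4) + i %% 4 by lia.
rewrite nth_phi; [|lia|lia].
have -> : nth la v i = nth la v (4 * (i %/ 4) + i %% 4) by congr nth; lia.
rewrite nth_phi; [|lia|lia].
rewrite /X in H; rewrite H //; lia.
Qed.
End PhiFacts.

Definition claimV (v : word) := forall p, 1 <= p -> p != 3 -> p < size v ->
  nth la v p.-1 = lb -> nth la v p = la ->
  exists e, [/\ e.+1 < p, p + e < (size v).-1,
     (forall i, i < e -> nth la v (p + i) = nth la v i),
     nth la v (p + e) = la & nth la v e = lb].

Ltac clear_nth := repeat match goal with H : nth _ _ _ = _ |- _ => clear H end.
Ltac li := clear_nth; lia.

Lemma claimV_phi x : claimV x -> 6 <= size x ->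
  nth la x 0 = la -> nth la x 1 = lb -> nth la x 2 = lb -> nth la x 3 = la ->
  nth la x 4 = lb -> nth la x 5 = la -> nth la x (size x).-1 = lb ->
  claimV (phi x).
Proof.
move=> IH Hs X0 X1 X2 X3 X4 X5 Xl p Hp1 Hp3 Hps.
rewrite size_phi in Hps *.
have Hx0 : 0 < size x by li.
have V0 : nth la (phi x) 0 = la by rewrite -(muln0 4) ph0 // X0.
have V1 : nth la (phi x) 1 = lb by rewrite -[1]/(4 * 0 + 1) ph1 // X0.
have V2 : nth la (phi x) 2 = lb by rewrite -[2]/(4 * 0 + 2) ph2 // X0.
pose q := p %/ 4; pose r := p %% 4.
have Ep : p = 4 * q + r by rewrite /q /r mulnC -divn_eq.
have Hr : r < 4 by rewrite /r ltn_mod.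
clearbody q r; subst p.
have Hq : q < size x by li.
case: r Hr Hp1 Hp3 Hps => [|[|[|[|r]]]] // _ Hp1 Hp3 Hps.
-
  rewrite addn0 in Hp1 Hp3 Hps *.
  have Eq1 : (4 * q).-1 = 4 * q.-1 + 3 by li.
  rewrite Eq1 ph3; last by li.
  rewrite ph0 //.
  move=> Xq1 Xq.
  have [Hq3|Hq3] := eqVneq q 3.
  + subst q. exists 8; split.
    * by [].
    * li.
    * move=> i Hi; apply: (phi_shift (e0 := 2)) => //; first li.
      by case=> [|[|]] //= _; rewrite ?X3 ?X0 ?X4 ?X1.
    * by rewrite -[_ + 8]/(4 * 5) ph0 //; li.
    * by rewrite -[8]/(4 * 2) ph0 //; li.
  + have Hq1 : 1 <= q by li.
    have [e0 [He1 He2 He3 He4 He5]] := IH q Hq1 Hq3 Hq Xq1 Xq.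
    exists (4 * e0); split.
    * li.
    * li.
    * by apply: phi_shift => //; li.
    * by rewrite -mulnDr ph0 //; li.
    * by rewrite ph0 //; li.
-
  have Eq1 : (4 * q + 1).-1 = 4 * q by li.
  rewrite Eq1 ph0 // ph1 // => Xq _.
  have Hq0 : 0 < q by move: Xq; case: (q) => //; rewrite X0.
  exists 1; split.
  + li.
  + li.
  + by case=> // _; rewrite addn0 ph1 // Xq V0.
  + by rewrite -addnA ph2 // Xq.
  + by [].
-
  have Eq1 : (4 * q + 2).-1 = 4 * q + 1 by li.
  by rewrite Eq1 ph1 // ph2 // => ->.
-
  have Eq1 : (4 * q + 3).-1 = 4 * q + 2 by li.
  rewrite Eq1 ph2 // ph3 // => _ Xq.
  have Hq0 : 0 < q by move: Hp3; case: (q) => //.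
  have Hq1 : q.+1 < size x.
    have : q != (size x).-1 by apply/eqP => E; move: Xq; rewrite E Xl.
    li.
  have E4 : 4 * q + 3 + 1 = 4 * q.+1 by li.
  have E5 : 4 * q + 3 + 2 = 4 * q.+1 + 1 by li.
  case Xq1 : (nth la x q.+1).
  + exists 2; split.
    * li.
    * li.
    * case=> [|[|]] // _; first by rewrite addn0 ph3 // Xq V0.
      by rewrite E4 ph0 // Xq1 V1.
    * by rewrite E5 ph1 // Xq1.
    * by [].
  + exists 1; split.
    * li.
    * li.
    * by case=> // _; rewrite addn0 ph3 // Xq V0.
    * by rewrite E4 ph0 // Xq1.
    * by [].
Qed.

Definition claimVb (v : word) :=
  all (fun p => (p != 3) ==> (nth la v p.-1 == lb) ==> (nth la v p == la) ==>
     has (fun e => [&& e.+1 < p, p + e < (size v).-1,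
                   all (fun i => nth la v (p + i) == nth la v i) (iota 0 e),
                   nth la v (p + e) == la & nth la v e == lb]) (iota 0 (size v)))
   (iota 1 (size v).-1).

Lemma claimVb_ok v : claimVb v -> claimV v.
Proof.
move=> /allP H p Hp1 Hp3 Hps Hb Ha.
have := H p; rewrite mem_iota Hp1 Hp3 Hb Ha /= => /(_ ltac:(lia)) /hasP [e _].
case/and5P => H1 H2 /allP H3 /eqP H4 /eqP H5; exists e; split => //.
by move=> i Hi; apply/eqP/H3; rewrite mem_iota.
Qed.

Lemma claimV_V1 : claimV (V 1).
Proof. by apply: claimVb_ok; vm_compute. Qed.

Lemma Inv_V k : 1 <= k -> [/\ claimV (V k), 6 <= size (V k),
  [/\ nth la (V k) 0 = la, nth la (V k) 1 = lb, nth la (V k) 2 = lb, nth la (V k) 3 = la &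
      nth la (V k) 4 = lb /\ nth la (V k) 5 = la] & nth la (V k) (size (V k)).-1 = lb].
Proof.
elim: k => // k IH _.
case: (posnP k) => [->|Hk]; first by split; [exact: claimV_V1|by vm_compute|by vm_compute|by vm_compute].
have [H1 H2 [X0 X1 X2 X3 [X4 X5]] Xl] := IH Hk.
have -> : V k.+1 = phi (V k) by [].
have Hx0 : 0 < size (V k) by lia.
have Hx1 : 1 < size (V k) by lia.
split.
- exact: claimV_phi.
- rewrite size_phi; lia.
- split.
  + by rewrite -(muln0 4) ph0 // X0.
  + by rewrite -[1]/(4 * 0 + 1) ph1 // X0.
  + by rewrite -[2]/(4 * 0 + 2) ph2 // X0.
  + by rewrite -[3]/(4 * 0 + 3) ph3 // X0.
  + split; first by rewrite -[4]/(4 * 1) ph0 // X1.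
    by rewrite -[5]/(4 * 1 + 1) ph1 // X1.
- have -> : (size (phi (V k))).-1 = 4 * (size (V k)).-1 + 3 by rewrite size_phi; lia.
  by rewrite ph3 //; lia.
Qed.

Definition claimW (w : word) := forall c, 4 <= c -> c.+1 < size w ->
  nth la w c = lb -> nth la w c.+1 = la ->
  exists d, [/\ d < c, c + d < size w,
     (forall i, i < d -> nth la w (c + i) = nth la w i),
     nth la w (c + d) = la & nth la w d = lb].

Lemma claimW_wn m : claimW (wn m.+4.+1).
Proof.
rewrite wn_eq; have [H1 H2 _ _] := Inv_V (k := m.+1) isT.
set v := V m.+1 in H1 H2 *.
have Su : size (dropl v) = (size v).-1 by rewrite /dropl size_take; case: (size v) => //= n; rewrite ltnSn.
have Nu : forall i, i < (size v).-1 -> nth la (dropl v) i = nth la v i.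
  by move=> i Hi; rewrite /dropl nth_take.
move=> c Hc4 /=; rewrite Su => Hcs Hb Ha.
have Hc1 : 1 <= c by lia.
have Hc3 : c != 3 by lia.
have Hcv : c < size v by lia.
have Ec : c = c.-1.+1 by lia.
have Hb' : nth la v c.-1 = lb.
  rewrite -Nu; last lia.
  by move: Hb; rewrite {1}Ec.
have Ha' : nth la v c = la by move: Ha; rewrite /= Nu //; lia.
have [e [He1 He2 He3 He4 He5]] := H1 c Hc1 Hc3 Hcv Hb' Ha'.
exists e.+1; split.
- lia.
- lia.
- case=> [|i] Hi; first by rewrite addn0.
  rewrite addnS /= Nu; last lia. rewrite Nu; last lia. apply: He3; lia.
- by rewrite addnS /= Nu //; lia.
- by rewrite /= Nu //; lia.
Qed.

Ltac clean := repeat match goal with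
 | H : nth _ _ _ = _ |- _ => clear H
 | H : @eq (seq _) _ _ |- _ => clear H
 | H : forall _, _ |- _ => clear H
 | H : is_true (lexle _ _) |- _ => clear H
 | H : claimW _ |- _ => clear H
 end.
Ltac li3 := clean; lia.

Lemma size_V k : size (V k) = 9 * 4 ^ k.
Proof. elim: k => // k IH; rewrite /V iterS -/(V k) size_phi IH expnS; li3. Qed.

Lemma mismatch_w (w : word) c1 l d : d < c1 -> c1 + l <= size w ->
  (forall i, i < d -> i < l -> nth la w (c1 + i) = nth la w i) ->
  (d < l -> nth la w (c1 + d) = la /\ nth la w d = lb) ->
  lexle (take c1 w) (take l (drop c1 w)) = false.
Proof.
move=> Hd Hs H1 H2.
have S1 : size (take c1 w) = c1 by rewrite size_take; case: ltnP => //; li3.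
have S2 : size (take l (drop c1 w)) = l by rewrite size_take size_drop; case: ltnP => //; li3.
have N1 : forall i, i < c1 -> nth la (take c1 w) i = nth la w i by move=> i Hi; rewrite nth_take.
have N2 : forall i, i < l -> nth la (take l (drop c1 w)) i = nth la w (c1 + i)
  by move=> i Hi; rewrite nth_take // nth_drop.
apply: (cmp_mismatch (d := d)); rewrite ?S1 ?S2 //.
- move=> i Hi Hil; rewrite N1 ?N2 //; [exact: H1|li3].
- move=> Hdl; rewrite N1 ?N2 //; exact: H2.
Qed.

Lemma Nyldon_wn5 m : Nyldon (wn m.+4.+1).
Proof.
have HW := @claimW_wn m.
have Ew := @wn_eq m.
have [_ _ [X0 X1 X2 X3 [X4 X5]] _] := Inv_V (k := m.+1) isT.
have Sv := size_V m.+1.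
set w := wn m.+4.+1 in HW Ew *.
set v := V m.+1 in Ew X0 X1 X2 X3 X4 X5 Sv.
have Hv : 0 < size v by rewrite Sv; have := expn_gt0 4 m.+1; li3.
have Sw : size w = size v by rewrite Ew /= /dropl size_take; move: Hv; case: (size v) => //= n _; rewrite ltnSn.
have Sge : 36 <= size w by rewrite Sw Sv expnS; have := expn_gt0 4 m; li3.
have Nw : forall i, i < 6 -> nth la w i.+1 = nth la v i.
  by move=> i Hi; rewrite Ew /= /dropl nth_take //; li3.
have W0 : nth la w 0 = lb by rewrite Ew.
have W1 : nth la w 1 = la by rewrite Nw.
have W2 : nth la w 2 = lb by rewrite Nw.
have W3 : nth la w 3 = lb by rewrite Nw.
have W4 : nth la w 4 = la by rewrite Nw.
have W5 : nth la w 5 = lb by rewrite Nw.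
have W6 : nth la w 6 = la by rewrite Nw.
apply: nyldon_crit; first li3.
move=> c1 l Hc1 Hl Hcl Hle.
case Wc : (nth la w c1); last first.
  by exfalso; move: Hle; rewrite (@mismatch_w w c1 l 0) //; move=> _; rewrite addn0.
have Hc12 : 2 <= c1 by case: c1 Hc1 Wc {Hcl Hle} => [|[|]] //; rewrite W1.
case: (ltnP l 2) => Hl2.
  have El : l = 1 by li3.
  exfalso; move: Hle; rewrite (@mismatch_w w c1 l 1) //.
  + by case=> // _ _; rewrite addn0 Wc W0.
  + by rewrite El.
case Wc1 : (nth la w c1.+1).
  by constructor 1.
have Hc13 : 3 <= c1 by case: c1 Hc12 Wc Wc1 {Hcl Hle Hc1} => [|[|[|]]] //; rewrite W3.
case: (ltnP c1 4) => Hc14.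
  have Ec : c1 = 3 by li3.
  subst c1.
  case: (ltnP l 3) => Hl3.
    exfalso; move: Hle; rewrite (@mismatch_w w 3 l 2) //.
    * by case=> [|[|]] // _ _; rewrite ?addn0 ?W3 ?W0 ?W4 ?W1.
    * li3.
  case: (ltnP l 4) => Hl4.
    have El : l = 3 by li3.
    subst l; constructor 3; split; first li3.
    by split => //; rewrite (_ : 3 + 3 = 6) // W6.
  by constructor 2; split => //; split; rewrite ?W3 ?W4 ?W5 ?W6.
have [d [Hd1 Hd2 Hd3 Hd4 Hd5]] := HW c1 Hc14 ltac:(li3) Wc Wc1.
exfalso; move: Hle; rewrite (@mismatch_w w c1 l d) //.
by move=> i Hi _; apply: Hd3.
Qed.

Lemma nyldon_critb w : 2 <= size w ->
  all (fun c1 => all (fun l => (c1 + l <= size w) ==> lexle (take c1 w) (take l (drop c1 w)) ==>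
     [|| (2 <= l) && (nth la w c1 == lb) && (nth la w c1.+1 == lb),
         (4 <= l) && [&& nth la w c1 == lb, nth la w c1.+1 == la, nth la w c1.+2 == lb & nth la w c1.+3 == la]
       | (c1 + l < size w) && (nth la w c1 == lb) && (nth la w (c1 + l) == la)])
     (iota 1 (size w))) (iota 1 (size w)) -> Nyldon w.
Proof.
move=> Hs /allP H; apply: nyldon_crit => // c1 l H1 H2 H3 Hle.
have /allP := H c1 ltac:(rewrite mem_iota; lia).
move=> /(_ l ltac:(rewrite mem_iota; lia)); rewrite H3 Hle /=.
case/or3P => [/andP [/andP [A /eqP B] /eqP C]|/andP [A /and4P [/eqP B /eqP C /eqP D /eqP E]]|/andP [/andP [A /eqP B] /eqP C]].
- by constructor 1.
- by constructor 2.
- by constructor 3.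
Qed.

Lemma Nyldon_small n : 1 <= n <= 4 -> Nyldon (wn n).
Proof.
case: n => [|[|[|[|[|n]]]]] //= _.
- exact: NY_single.
- exact: NY_single.
- exact: NY_ba.
- by apply: nyldon_critb; vm_compute.
Qed.

Lemma TM_head k : exists t, TM k = la :: t.
Proof. elim: k => [|k [t IH]]; first by exists [::]. by rewrite /= IH; eexists. Qed.

Lemma TM_last j : exists t, TM (2 * j) = rcons t la.
Proof.
elim: j => [|j [t IH]]; first by exists [::].
have -> : 2 * j.+1 = (2 * j).+2 by lia.
by rewrite TM2 IH !catA -rcons_cat; eexists.
Qed.

Lemma dropl_rcons t c : dropl (rcons t c) = t.
Proof. by rewrite /dropl size_rcons /= -cats1 take_size_cat. Qed.

Lemma compl_rcons t c : compl (rcons t c) = rcons (compl t) (~~ c).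
Proof. by rewrite /compl map_rcons. Qed.

Lemma wn5 m : wn m.+4.+1 = lb :: TM (2 * m).+2 ++ compl (TM (2 * m).+4) ++ dropl (compl (TM (2 * m).+4)).
Proof.
change (wn m.+4.+1) with (lb :: TM (2 * m.+4.+1 - 8) ++ compl (TM (2 * m.+4.+1 - 6)) ++ dropl (compl (TM (2 * m.+4.+1 - 6)))).
have -> : 2 * m.+4.+1 - 6 = (2 * m).+4 by lia.
by have -> : 2 * m.+4.+1 - 8 = (2 * m).+2 by lia.
Qed.

Lemma Wprefix_S n : Wprefix n.+1 = Wprefix n ++ wn n.+1.
Proof.
have E : iota 1 n.+1 = iota 1 n ++ [:: n.+1] by have := iotaD 1 n 1; rewrite addn1 add1n.
by rewrite /Wprefix E map_cat flatten_cat /= cats0.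
Qed.

Lemma Wprefix_eq m : Wprefix m.+4 = TM (2 * m).+3 ++ dropl (compl (TM (2 * m).+2)).
Proof.
elim: m => [|m IH]; first by vm_compute.
rewrite Wprefix_S IH wn5.
have [t Et] := TM_last m.+1.
have E2 : 2 * m.+1 = (2 * m).+2 by lia.
rewrite E2 in Et.
have -> : (2 * m.+1).+3 = (2 * m).+4.+1 by lia.
have -> : (2 * m.+1).+2 = (2 * m).+4 by lia.
set T := TM (2 * m).+2.
have Ec : forall r, dropl (compl T) ++ lb :: r = compl T ++ r.
  by move=> r; rewrite /T Et compl_rcons dropl_rcons /= cat_rcons.
rewrite -catA Ec.
change (TM (2 * m).+4.+1) with (TM (2 * m).+4 ++ compl (TM (2 * m).+4)).
change (TM (2 * m).+3) with (T ++ compl T).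
rewrite (TM2 (2 * m).+2) -/T.
by rewrite !compl_cat !complK !catA.
Qed.

Lemma Wprefix_TM n : exists k s, TM k = Wprefix n ++ s.
Proof.
case: n => [|[|[|[|m]]]].
- by exists 0, [:: la].
- by exists 0, [::].
- by exists 1, [::].
- by exists 2, [::].
- rewrite Wprefix_eq.
  have [t Et] := TM_last m.+1.
  have E2 : 2 * m.+1 = (2 * m).+2 by lia.
  rewrite E2 in Et.
  exists (2 * m).+4, (lb :: TM (2 * m).+2).
  change (TM (2 * m).+4) with (TM (2 * m).+3 ++ compl (TM (2 * m).+3)).
  change (TM (2 * m).+3) with (TM (2 * m).+2 ++ compl (TM (2 * m).+2)) at 2.
  rewrite compl_cat complK -!catA; congr (_ ++ _).
  by rewrite Et compl_rcons dropl_rcons /= cat_rcons.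
Qed.

Lemma TM_ext k j : exists s, TM (k + j) = TM k ++ s.
Proof.
elim: j => [|j [s IH]]; first by exists [::]; rewrite addn0 cats0.
by rewrite addnS /= IH -catA; eexists.
Qed.

Lemma TM_nth k k' i : i < 2 ^ k -> i < 2 ^ k' -> nth la (TM k) i = nth la (TM k') i.
Proof.
wlog Hk : k k' / k <= k'.
  move=> H H1 H2; case: (leqP k k') => Hkk; first exact: H.
  by symmetry; apply: H => //; lia.
move=> H1 _; have [s Es] := TM_ext k (k' - k).
by rewrite subnKC in Es => //; rewrite Es nth_cat size_TM H1.
Qed.

Lemma part1 n i : i < size (Wprefix n) -> nth la (Wprefix n) i = TMinf i.
Proof.
have [k [s Es]] := Wprefix_TM n.
move=> Hi; rewrite /TMinf.
have Hk : i < 2 ^ k by rewrite -size_TM Es size_cat; lia.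
rewrite -(TM_nth Hk); last by apply: ltnW; apply: ltn_expl.
by rewrite Es nth_cat Hi.
Qed.

Lemma part1b i : exists n, i < size (Wprefix n).
Proof.
exists i.+4; rewrite Wprefix_eq size_cat size_TM.
have H1 := ltn_expl i (isT : 1 < 2).
have H2 : 2 ^ i <= 2 ^ (2 * i).+3 by rewrite leq_exp2l //; lia.
lia.
Qed.

Lemma part2 n : 1 <= n -> lexle (wn n) (wn n.+1).
Proof.
case: n => [|[|[|[|[|m]]]]] // _; try by vm_compute.
rewrite (wn5 m) (wn5 m.+1).
have -> : (2 * m.+1).+2 = (2 * m).+4 by lia.
rewrite !(TM2 (2 * m).+2).
have [t Et] := TM_head (2 * m).+2.
move: Et; generalize (TM (2 * m).+2) => T ->.
rewrite !compl_cat !complK -!catA lexle_cons lexle_cat lexle_cat.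
by [].
Qed.

Theorem theorem6' :
  [/\ (forall n i, i < size (Wprefix n) -> nth la (Wprefix n) i = TMinf i),
      (forall i, exists n, i < size (Wprefix n)),
      (forall n, 1 <= n -> lexle (wn n) (wn n.+1)) &
      (forall n, 1 <= n -> Nyldon (wn n))].
Proof.
split.
- exact: part1.
- exact: part1b.
- exact: part2.
- move=> n Hn; case: (leqP n 4) => Hn4.
  + by apply: Nyldon_small; rewrite Hn Hn4.
  + have -> : n = (n - 5).+4.+1 by lia.
    exact: Nyldon_wn5.
Qed.

Theorem theorem6 :
  [/\ (* (1) w_1 w_2 w_3 ... = TM : every prefix agrees with TM, and prefixes grow unboundedly *)
      (forall n i, i < size (Wprefix n) -> nth la (Wprefix n) i = TMinf i),
      (forall i, exists n, i < size (Wprefix n)),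
      (* (2) *)
      (forall n, 1 <= n -> lexle (wn n) (wn n.+1)) &
      (* (3) *)
      (forall n, 1 <= n -> Nyldon (wn n))].
Proof. exact: theorem6'. Qed.
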